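(* For every $v\in\mathbb T_F$ and $i\in[1,n]$, the pull-back $\mu_{v_0}^*(X_{i;v})\in R(X_1,\dots,X_n)$ satisfies $$\lim_{\mathbf t\to0}\mu_{v_0}^*(X_{i;v})=\mathbf X^{\mathbf c_{i;v}}:=X_1^{c_{1i;v}}\cdots X_n^{c_{ni;v}}$$ (the limit along any path $\gamma:[0,1]\to\mathbb C^n$ with $\gamma(1)=0$). Moreover, $\mu_{v_0}^*(X_{i;v})$ is the unique homogenization of degree $\mathbf c_{i;v}$ of the coefficient-free rational function $\mu_{v_0}^*(X_{i;v})|_{\mathbf t=(1,\dots,1)}\in\mathbb C(X_1,\dots,X_n)$ satisfying this limit property; here, writing that coefficient-free function as $f/g$ with $f,g\in\mathbb C[X_1,\dots,X_n]$ coprime, a homogenization of degree $\mathbf c$ means a rational function $\tilde f/\tilde g$ homogeneous of degree $\mathbf c$ for the standard grading, where $\tilde f,\tilde g\in R[X_1,\dots,X_n]$ are obtained from $f,g$ by multiplying each monomial by a monomial in $t_1,\dots,t_n$.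
   Context: Fix $n\ge1$, a skew-symmetrizable integer matrix $B\in\mathbb Z^{n\times n}$ and a subset $F\subseteq[1,n]$ of frozen directions. Matrix mutation in direction $k$: $b'_{ij}=-b_{ij}$ if $i=k$ or $j=k$, else $b'_{ij}=b_{ij}+\operatorname{sgn}(b_{ik})[b_{ik}b_{kj}]_+$, with $[x]_+=\max(x,0)$ (componentwise on vectors). Let $\mathbb T$ be the $n$-regular tree with edges labeled by $[1,n]$ (distinct labels at each vertex) and initial vertex $v_0$, and $\mathbb T_F$ the subtree of vertices reachable from $v_0$ using only edges with labels in $[1,n]\setminus F$. Set $B_{v_0}=B$ and $B_{v'}=\mu_k(B_v)$ for an edge $v\overset{k}{-}v'$; write $B_v=(b^v_{ij})$. The $\mathbf c$-vectors $\mathbf c_{j;v}=(c_{1j;v},\dots,c_{nj;v})\in\mathbb Z^n$ are defined by $\mathbf c_{j;v_0}=\mathbf e_j$ and, for an edge $v\overset{k}{-}v'$, $c_{ik;v'}=-c_{ik;v}$ and $c_{ij;v'}=c_{ij;v}+[c_{ik;v}]_+b^v_{kj}+c_{ik;v}[-b^v_{kj}]_+$ for $j\ne k$. Each $\mathbf c_{j;v}$ is nonzero and sign-coherent (all entries $\ge0$ or all $\le0$). Let $R=\mathbb C[t_1,\dots,t_n]$ and $\mathbf t^{\mathbf a}=\prod t_i^{a_i}$ for $\mathbf a\in\mathbb Z_{\ge0}^n$. For $v\in\mathbb T_F$ let $U_v=\operatorname{Spec}R[X_{1;v},\dots,X_{n;v}]$. For an edge $v\overset{k}{-}v'$ in $\mathbb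 T_F$ let $\mu_k:U_v\dashrightarrow U_{v'}$ be the birational map with pull-back $\mu_k^*(X_{k;v'})=X_{k;v}^{-1}$ and, for $i\ne k$, $\mu_k^*(X_{i;v'})=X_{i;v}\big(\mathbf t^{[\operatorname{sgn}(b^v_{ki})\mathbf c_{k;v}]_+}+\mathbf t^{[-\operatorname{sgn}(b^v_{ki})\mathbf c_{k;v}]_+}X_{k;v}^{-\operatorname{sgn}(b^v_{ki})}\big)^{-b^v_{ki}}$. $\widehat{\mathscr X}$ is the $R$-scheme obtained by gluing the $U_v$ along the largest open subsets on which the composite maps are isomorphisms. Write $X_i:=X_{i;v_0}$; $\mu_{v_0}^*(X_{i;v})\in R(X_1,\dots,X_n)$ is obtained by iterating these pull-backs along the path from $v$ to $v_0$. Standard grading: $\deg X_i=\mathbf e_i$, $\deg t_i=-\mathbf e_i$, extended to ratios of homogeneous elements by $\deg(f/g)=\deg f-\deg g$. *)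

(* Defs.v *)
From HB Require Import structures.
From mathcomp Require Import all_boot all_order all_algebra.
From mathcomp Require Import fraction.
From mathcomp Require Import Rstruct.
From mathcomp Require Import complex.
From mathcomp Require Import mpoly.
Set Implicit Arguments. Unset Strict Implicit. Unset Printing Implicit Defensive.
Import Order.TTheory GRing.Theory Num.Theory.
Local Open Scope ring_scope.

Notation "x %:F" := (@FracField.tofrac _ x) (format "x %:F") : ring_scope.

Definition RR : rcfType := Rdefinitions.R.
Definition Cc := (RR)[i].
Definition normC (z : Cc) : RR := ComplexField.Normc.normc z.

Definition pos (x : int) : int := Num.max x 0.

Definition skew_symmetrizable n (B : 'M[int]_n) : Prop :=
  exists d : 'I_n -> nat, (forall i, (0 < d i)%N) /\
    forall i j, (d i)%:Z * B i j = - ((d j)%:Z * B j i).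

Definition mut_mat n (k : 'I_n) (B : 'M[int]_n) : 'M[int]_n :=
  \matrix_(i, j) (if (i == k) || (j == k) then - B i j
                  else B i j + sgz (B i k) * pos (B i k * B k j)).

(* c-vector mutation; column j of Cm is c_{j;v}, entry (i,j) is c_{ij;v};
   B is the exchange matrix B_v at the vertex v being mutated from *)
Definition mut_c n (k : 'I_n) (B Cm : 'M[int]_n) : 'M[int]_n :=
  \matrix_(i, j) (if j == k then - Cm i k
                  else Cm i j + pos (Cm i k) * B k j + Cm i k * pos (- B k j)).

(* Vertices of the tree T are identified with reduced words (the labels of the
   unique path from v0); T_F = reduced words with all labels outside F. *)
Definition reduced n (p : seq 'I_n) : bool := sorted (fun a b => a != b) p.
Definition in_TF n (F : {set 'I_n}) (p : seq 'I_n) : bool :=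
  reduced p && all (fun k => k \notin F) p.

Definition Bv n (B : 'M[int]_n) (p : seq 'I_n) : 'M[int]_n :=
  (foldl (fun st k => (mut_mat k st.1, mut_c k st.1 st.2)) (B, 1%:M) p).1.
Definition Cv n (B : 'M[int]_n) (p : seq 'I_n) : 'M[int]_n :=
  (foldl (fun st k => (mut_mat k st.1, mut_c k st.1 st.2)) (B, 1%:M) p).2.

Definition sign_coherent n (Cm : 'M[int]_n) : Prop :=
  forall j : 'I_n, (exists i, Cm i j != 0) /\
    ((forall i, 0 <= Cm i j) \/ (forall i, Cm i j <= 0)).

(* R[X_1..X_n] = C[t_1..t_n, X_1..X_n]: variable lshift n i is t_i,
   variable rshift n i is X_i. *)
Definition Pol n := {mpoly Cc[n + n]}.
Definition KK n := {fraction Pol n}.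
Definition tP n (i : 'I_n) : Pol n := 'X_(lshift n i).
Definition xP n (i : 'I_n) : Pol n := 'X_(rshift n i).
Definition tK n (i : 'I_n) : KK n := (tP i)%:F.
Definition xK n (i : 'I_n) : KK n := (xP i)%:F.

(* t^a for an integer vector a (used only with a >= 0) *)
Definition tmon n (a : 'I_n -> int) : KK n := \prod_i tK i ^ a i.
Definition xmonK n (c : 'I_n -> int) : KK n := \prod_i xK i ^ c i.

(* one step of pull-back: Y i = mu_{v0}^*(X_{i;v}) given B = B_v, Cm = C_v;
   returns mu_{v0}^*(X_{i;v'}) for v -k- v' *)
Definition mut_Y n (k : 'I_n) (B Cm : 'M[int]_n) (Y : 'I_n -> KK n)
  : 'I_n -> KK n :=
  fun i => if i == k then (Y k)^-1 else
    let b := B k i in let s := sgz b in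
    Y i * (tmon (fun l => pos (s * Cm l k))
           + tmon (fun l => pos (- s * Cm l k)) * Y k ^ (- s)) ^ (- b).

Definition seed_step n (st : 'M[int]_n * 'M[int]_n * ('I_n -> KK n)) (k : 'I_n) :=
  (mut_mat k st.1.1, mut_c k st.1.1 st.1.2, mut_Y k st.1.1 st.1.2 st.2).

(* mu_{v0}^*(X_{i;v}) for the vertex v reached by the word p *)
Definition pullback n (B : 'M[int]_n) (p : seq 'I_n) (i : 'I_n) : KK n :=
  (foldl (@seed_step n) (B, 1%:M, @xK n) p).2 i.

Definition pt n (t X : 'I_n -> Cc) : 'I_(n + n) -> Cc :=
  fun k => match split k with inl i => t i | inr i => X i end.

Definition valueAt n (h : KK n) (q : 'I_(n + n) -> Cc) (z : Cc) : Prop :=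
  exists P Q : Pol n, meval q Q != 0 /\ h = P%:F / Q%:F /\
                      z = meval q P / meval q Q.

Definition path_cont n (gam : RR -> 'I_n -> Cc) : Prop :=
  forall s : RR, 0 <= s <= 1 -> forall e : RR, 0 < e -> exists2 d : RR, 0 < d &
    forall s' : RR, 0 <= s' <= 1 -> `|s' - s| < d ->
      forall i, normC (gam s' i - gam s i) < e.

(* lim_{t -> 0} h = X^c along every path:  for generic X (outside the zero set
   of a nonzero polynomial D in X), for every continuous path gam with
   gam(1) = 0 along which h(gam(s), X) is defined for s < 1 close to 1,
   h(gam(s), X) tends to X^c as s -> 1. *)
Definition LimitProp n (h : KK n) (c : 'I_n -> int) : Prop :=
  exists2 D : {mpoly Cc[n]}, D != 0 &
  forall X : 'I_n -> Cc, meval X D != 0 ->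
  forall gam : RR -> 'I_n -> Cc, path_cont gam -> gam 1 = (fun _ => 0) ->
  (exists2 d0 : RR, 0 < d0 & forall s : RR, 1 - d0 < s < 1 ->
      exists z, valueAt h (pt (gam s) X) z) ->
  forall e : RR, 0 < e -> exists2 d : RR, 0 < d &
    forall s : RR, 1 - d < s < 1 -> forall z, valueAt h (pt (gam s) X) z ->
      normC (z - \prod_j X j ^ c j) < e.

Definition at1 n (P : Pol n) : {mpoly Cc[n]} :=
  comp_mpoly [tuple (match split k with inl _ => 1 | inr i => 'X_i end)
             | k < n + n] P.

Definition SpecOne n (h : KK n) (f g : {mpoly Cc[n]}) : Prop :=
  exists P Q : Pol n, h = P%:F / Q%:F /\ at1 Q != 0 /\ at1 P * g = at1 Q * f.

Definition mcoprime n (f g : {mpoly Cc[n]}) : Prop :=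
  forall d a b : {mpoly Cc[n]}, f = d * a -> g = d * b -> (msize d <= 1)%N.

Definition tlift n (a : 'X_{1..n} -> 'I_n -> nat) (f : {mpoly Cc[n]}) : Pol n :=
  \sum_(m <- msupp f) f@_m *:
     ((\prod_i tP i ^+ a m i) * (\prod_i xP i ^+ m i)).

(* homogeneous polynomial of degree d: deg X_i = e_i, deg t_i = - e_i *)
Definition ishomog n (P : Pol n) (d : 'I_n -> int) : Prop :=
  forall m, m \in msupp P ->
    forall i, (m (rshift n i))%:Z - (m (lshift n i))%:Z = d i.

Definition homogK n (h : KK n) (c : 'I_n -> int) : Prop :=
  exists P Q : Pol n, exists d1 d2 : 'I_n -> int,
    Q != 0 /\ h = P%:F / Q%:F /\ ishomog P d1 /\ ishomog Q d2 /\
    forall i, d1 i - d2 i = c i.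

Definition IsHomogenization n (h : KK n) (f g : {mpoly Cc[n]}) (c : 'I_n -> int)
  : Prop :=
  exists a b : 'X_{1..n} -> 'I_n -> nat,
    h = (tlift a f)%:F / (tlift b g)%:F /\ homogK h c.

(* Main.v *)
Require Import Defs.
From HB Require Import structures.
From mathcomp Require Import all_boot all_order all_algebra.
From mathcomp Require Import fraction.
From mathcomp Require Import Rstruct.
From mathcomp Require Import complex.
From mathcomp Require Import mpoly.
From mathcomp Require Import ring lra zify.
From Stdlib Require Import Classical.
Import Order.TTheory GRing.Theory Num.Theory.
Local Open Scope ring_scope.
Set Implicit Arguments. Unset Strict Implicit. Unset Printing Implicit Defensive.


Lemma pos_ge0 (x : int) : 0 <= x -> pos x = x.
Proof. by move=> h; rewrite /pos; apply/max_idPl. Qed.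
Lemma pos_le0 (x : int) : x <= 0 -> pos x = 0.
Proof. by move=> h; rewrite /pos; apply/max_idPr. Qed.

Lemma pos_arith (b c : int) : b * pos (sgz b * c) = pos c * b + c * pos (- b).
Proof.
case: (ltrgtP b 0) => hb.
- rewrite ltr0_sgz // mulN1r (pos_ge0 (x := - b)); last lia.
  case: (lerP 0 c) => hc.
  + rewrite pos_le0 ?pos_ge0; [ring|lia|lia].
  + rewrite (pos_ge0 (x := - c)) ?(pos_le0 (x := c)); [ring|lia|lia].
- rewrite gtr0_sgz // mul1r (pos_le0 (x := - b)); last lia.
  ring.
- rewrite hb sgz0 mul0r /pos; have -> : Num.max 0 0 = 0 :> int by [].
  ring.
Qed.


Notation Hg := Defs.ishomog.
Section Homog.
Variable n : nat.
Implicit Types (P Q : Pol n) (d : 'I_n -> int).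

Definition wt (m : 'X_{1..n+n}) (i : 'I_n) : int :=
  (m (rshift n i))%:Z - (m (lshift n i))%:Z.

Lemma hgE P d : Hg P d <-> forall m, m \in msupp P -> forall i, wt m i = d i.
Proof. by []. Qed.

Lemma hg_eq P d d' : Hg P d -> d =1 d' -> Hg P d'.
Proof. by move=> h e m hm i; rewrite -e; apply: h. Qed.

Lemma hg0 d : Hg (0 : Pol n) d.
Proof. by move=> m; rewrite msupp0. Qed.

Lemma hgD P Q d : Hg P d -> Hg Q d -> Hg (P + Q) d.
Proof.
move=> hP hQ m /msuppD_le; rewrite mem_cat => /orP[]; [exact: hP|exact: hQ].
Qed.

Lemma hgZ c P d : Hg P d -> Hg (c *: P) d.
Proof. by move=> hP m /msuppZ_le; apply: hP. Qed.

Lemma hgN P d : Hg P d -> Hg (- P) d.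
Proof. by move=> hP; rewrite -scaleN1r; apply: hgZ. Qed.

Lemma wtD m1 m2 i : wt (m1 + m2)%MM i = wt m1 i + wt m2 i.
Proof. rewrite /wt !mnmDE !PoszD; ring. Qed.

Lemma hgM P Q d1 d2 : Hg P d1 -> Hg Q d2 ->
  Hg (P * Q) (fun i => d1 i + d2 i).
Proof.
move=> hP hQ m /msuppM_le /allpairsP [[m1 m2] /= [h1 h2 ->]] i.
change (wt (m1 + m2)%MM i = d1 i + d2 i).
by rewrite wtD; congr (_ + _); [apply: hP|apply: hQ].
Qed.

Lemma hgX m : Hg ('X_[m] : Pol n) (wt m).
Proof. by move=> m'; rewrite msuppX inE => /eqP ->. Qed.

Lemma hg1 : Hg (1 : Pol n) (fun _ => 0).
Proof. by move=> m; rewrite msupp1 inE => /eqP -> i; rewrite /wt !mnm0E. Qed.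

Definition mk (a b : 'I_n -> nat) : 'X_{1..n+n} :=
  [multinom match split k with inl i => a i | inr i => b i end | k < n + n].

Lemma split_l (i : 'I_n) : split (lshift n i) = inl i.
Proof. exact: (unsplitK (inl _ i)). Qed.
Lemma split_r (i : 'I_n) : split (rshift n i) = inr i.
Proof. exact: (unsplitK (inr _ i)). Qed.

Lemma mk_l a b i : mk a b (lshift n i) = a i.
Proof. by rewrite mnmE split_l. Qed.
Lemma mk_r a b i : mk a b (rshift n i) = b i.
Proof. by rewrite mnmE split_r. Qed.

Lemma wt_mk a b i : wt (mk a b) i = (b i)%:Z - (a i)%:Z.
Proof. by rewrite /wt mk_l mk_r. Qed.

Lemma monoE a b :
  (\prod_i tP i ^+ a i) * (\prod_i xP i ^+ b i) = 'X_[mk a b] :> Pol n.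
Proof.
rewrite [RHS]mpolyXE_id big_split_ord /=; congr (_ * _); apply: eq_bigr => i _.
  by rewrite mk_l.
by rewrite mk_r.
Qed.

End Homog.


Section Sub.
Variable n : nat.
Implicit Types (P Q : Pol n) (d : 'I_n -> int).

Definition sub0 : (n + n).-tuple {mpoly Cc[n]} :=
  [tuple (match split k with inl _ => 0 | inr i => 'X_i end) | k < n + n].
Definition ev0 (P : Pol n) : {mpoly Cc[n]} := comp_mpoly sub0 P.

Definition sub1 : (n + n).-tuple {mpoly Cc[n]} :=
  [tuple (match split k with inl _ => 1 | inr i => 'X_i end) | k < n + n].

Lemma at1E P : at1 P = comp_mpoly sub1 P. Proof. by []. Qed.

Lemma at1M P Q : at1 (P * Q) = at1 P * at1 Q. Proof. exact: rmorphM. Qed.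
Lemma at1D P Q : at1 (P + Q) = at1 P + at1 Q. Proof. exact: rmorphD. Qed.
Lemma at1B P Q : at1 (P - Q) = at1 P - at1 Q. Proof. exact: rmorphB. Qed.
Lemma at1_1 : at1 (1 : Pol n) = 1. Proof. exact: rmorph1. Qed.
Lemma ev0M P Q : ev0 (P * Q) = ev0 P * ev0 Q. Proof. exact: rmorphM. Qed.
Lemma ev0D P Q : ev0 (P + Q) = ev0 P + ev0 Q. Proof. exact: rmorphD. Qed.
Lemma ev0_1 : ev0 (1 : Pol n) = 1. Proof. exact: rmorph1. Qed.

Lemma at1Z c P : at1 (c *: P) = c *: at1 P. Proof. exact: comp_mpolyZ. Qed.
Lemma at1_sum (I : Type) (r : seq I) (F : I -> Pol n) :
  at1 (\sum_(i <- r) F i) = \sum_(i <- r) at1 (F i).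
Proof. exact: (raddf_sum (comp_mpoly sub1)). Qed.

Lemma mcoeff_sumE k (I : Type) (r : seq I) (F : I -> {mpoly Cc[k]}) m :
  (\sum_(i <- r) F i)@_m = \sum_(i <- r) (F i)@_m.
Proof. exact: raddf_sum. Qed.

Definition rp (m : 'X_{1..n+n}) : 'X_{1..n} := [multinom m (rshift n i) | i < n].

Lemma at1X m : at1 ('X_[m] : Pol n) = 'X_[rp m].
Proof.
rewrite at1E comp_mpolyX big_split_ord /= [RHS]mpolyXE_id.
rewrite big1 ?mul1r; last by move=> i _; rewrite tnth_mktuple split_l expr1n.
by apply: eq_bigr => i _; rewrite tnth_mktuple split_r mnmE.
Qed.

Lemma ev0X m : ev0 ('X_[m] : Pol n) =
  (\prod_(i < n) (0 : {mpoly Cc[n]}) ^+ m (lshift n i)) * 'X_[rp m].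
Proof.
rewrite /ev0 comp_mpolyX big_split_ord /=; congr (_ * _).
  by apply: eq_bigr => i _; rewrite tnth_mktuple split_l.
by rewrite [RHS]mpolyXE_id; apply: eq_bigr => i _; rewrite tnth_mktuple split_r mnmE.
Qed.

Lemma ev0_mono0 (k : 'I_n -> nat) : (exists i, k i != 0%N) ->
  ev0 ('X_[mk k k] : Pol n) = 0.
Proof.
move=> [i hi]; rewrite ev0X (bigD1 i) //= mk_l expr0n (negbTE hi) mul0r.
by rewrite mul0r.
Qed.

Lemma rp_mk a b : rp (mk a b) = [multinom b i | i < n].
Proof. by apply/mnmP => i; rewrite [LHS]mnmE mk_r mnmE. Qed.

Lemma at1_tlift (a : 'X_{1..n} -> 'I_n -> nat) f : at1 (tlift a f) = f.
Proof.
rewrite /tlift at1_sum [RHS]mpolyE; apply: eq_bigr => m _.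
rewrite monoE at1Z at1X rp_mk; congr (_ *: 'X_[_]).
by apply/mnmP => i; rewrite mnmE.
Qed.

Lemma rp_inj P d m1 m2 : Hg P d -> m1 \in msupp P -> m2 \in msupp P ->
  rp m1 = rp m2 -> m1 = m2.
Proof.
move=> hP h1 h2 e; apply/mnmP => k.
have er : forall i, m1 (rshift n i) = m2 (rshift n i).
  by move=> i; move/mnmP: e => /(_ i); rewrite !mnmE.
case: (split_ordP k) => i -> //.
have := hP _ h1 i; have := hP _ h2 i; rewrite er => e1 e2; lia.
Qed.

Lemma at1_coeff P d m0 : Hg P d -> m0 \in msupp P ->
  (at1 P)@_(rp m0) = P@_m0.
Proof.
move=> hP h0; rewrite [X in at1 X]mpolyE [X in _ = mcoeff _ X]mpolyE at1_sum.
rewrite !mcoeff_sumE.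
apply: eq_big_seq => m hm.
rewrite at1Z at1X.
rewrite !mcoeffZ !mcoeffX.
have -> : (rp m == rp m0) = (m == m0) by apply/eqP/eqP => [e|->//]; exact: (rp_inj hP hm h0 e).
by [].
Qed.

Lemma at1_inj0 P d : Hg P d -> at1 P = 0 -> P = 0.
Proof.
move=> hP h; apply/eqP; rewrite -msupp_eq0; case E: (msupp P) => [//|m0 s].
have h0 : m0 \in msupp P by rewrite E inE eqxx.
move: (h0); rewrite mcoeff_msupp -(at1_coeff hP h0) h mcoeff0 eqxx //.
Qed.

Lemma meval_ev0 (v : 'I_n -> Cc) P : meval v (ev0 P) = meval (pt (fun _ => 0) v) P.
Proof.
rewrite /ev0 comp_mpoly_meval; apply: meval_eq => k; rewrite tnth_mktuple /pt.
by case: (split k) => i; rewrite ?meval0 ?mevalXU.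
Qed.

End Sub.


Section Good.
Variable n : nat.
Implicit Types (P Q A : Pol n) (d c : 'I_n -> int) (h u : KK n).

Lemma X_neq0 (k : 'I_(n + n)) : ('X_k : Pol n) != 0.
Proof.
apply/eqP => h; have := @mcoeffX (n + n) Cc U_(k)%MM U_(k)%MM; rewrite h mcoeff0 eqxx.
by move/eqP; rewrite eq_sym oner_eq0.
Qed.

Lemma xK_neq0 i : xK i != 0 :> KK n.
Proof. by rewrite /xK tofrac_eq0 X_neq0. Qed.

Lemma xmonK_eq c c' : c =1 c' -> xmonK c = xmonK c'.
Proof. by move=> e; apply: eq_bigr => i _; rewrite e. Qed.

Lemma tmon_eq c c' : c =1 c' -> tmon c = tmon c' :> KK n.
Proof. by move=> e; apply: eq_bigr => i _; rewrite e. Qed.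

Lemma xmonKD c c' : xmonK (fun i => c i + c' i) = xmonK c * xmonK c' :> KK n.
Proof. by rewrite -big_split; apply: eq_bigr => i _; rewrite expfzDr ?xK_neq0. Qed.

Lemma xmonK0 : xmonK (fun _ => 0) = 1 :> KK n.
Proof. by rewrite /xmonK big1. Qed.

Lemma tmon0 : tmon (fun _ => 0) = 1 :> KK n.
Proof. by rewrite /tmon big1. Qed.

Lemma xmonKN c : xmonK (fun i => - c i) = (xmonK c)^-1 :> KK n.
Proof. by rewrite /xmonK -prodfV; apply: eq_bigr => i _; rewrite invr_expz. Qed.

Lemma xmonK_neq0 c : xmonK c != 0 :> KK n.
Proof. by rewrite prodf_seq_neq0; apply/allP => i _; rewrite expfz_neq0 ?xK_neq0. Qed.

Lemma mono_frac (k : 'I_n -> nat) :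
  tmon (fun i => (k i)%:Z) * xmonK (fun i => (k i)%:Z) = ('X_[mk k k] : Pol n)%:F.
Proof.
rewrite -monoE tofracM !rmorph_prod; congr (_ * _); apply: eq_bigr => i _;
  by rewrite rmorphXn.
Qed.

Definition Good h c := exists A B0 (d : 'I_n -> int), Hg A d /\ Hg B0 d /\
  ev0 A = ev0 B0 /\ ev0 B0 != 0 /\ h = xmonK c * (A%:F / B0%:F).

Lemma ev0_neq0 P : ev0 P != 0 -> P != 0.
Proof. by apply: contraNneq => ->; rewrite /ev0 raddf0. Qed.

Lemma Good_eq h c c' : c =1 c' -> Good h c -> Good h c'.
Proof.
move=> e [A [B0 [d [hA [hB [e0 [nz ->]]]]]]].
exists A, B0, d; refine (conj hA (conj hB (conj e0 (conj nz _)))).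
by rewrite (xmonK_eq e).
Qed.

Lemma Good1 : Good 1 (fun _ => 0).
Proof.
exists 1, 1, (fun _ : 'I_n => 0 : int).
split; first exact: hg1.
split; first exact: hg1.
split; first by [].
split; first by rewrite ev0_1 oner_eq0.
by rewrite xmonK0 divff ?mulr1 // tofrac_eq0 oner_eq0.
Qed.

Lemma Good_mul h1 h2 c1 c2 : Good h1 c1 -> Good h2 c2 ->
  Good (h1 * h2) (fun i => c1 i + c2 i).
Proof.
move=> [A1 [B1 [d1 [hA1 [hB1 [e1 [nz1 ->]]]]]]] [A2 [B2 [d2 [hA2 [hB2 [e2 [nz2 ->]]]]]]].
exists (A1 * A2), (B1 * B2), (fun i => d1 i + d2 i); refine (conj _ (conj _ (conj _ (conj _ _)))).
- exact: hgM.
- exact: hgM.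
- by rewrite !ev0M e1 e2.
- rewrite ev0M; apply: mulf_neq0; [exact: nz1|exact: nz2].
- rewrite xmonKD !tofracM invfM mulrACA; congr (_ * _); exact: mulrACA.
Qed.

Lemma Good_inv h c : Good h c -> Good h^-1 (fun i => - c i).
Proof.
move=> [A [B0 [d [hA [hB [e [nz ->]]]]]]].
exists B0, A, d; refine (conj hB (conj hA (conj (esym e) (conj _ _)))).
  rewrite e; exact: nz.
by rewrite xmonKN invfM invf_div.
Qed.

Lemma Good_exp h c (m : nat) : Good h c -> Good (h ^+ m) (fun i => m%:Z * c i).
Proof.
move=> hg; elim: m => [|m IH].
  by apply: (Good_eq _ Good1) => i; rewrite mul0r.
rewrite exprS; apply: (Good_eq _ (Good_mul hg IH)) => i.
rewrite -addn1 PoszD; ring.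
Qed.

Lemma Good_expz h c (z : int) : Good h c -> Good (h ^ z) (fun i => z * c i).
Proof.
move=> hg; case: z => m; first exact: Good_exp.
change (Good (h ^+ m.+1)^-1 (fun i => Negz m * c i)).
apply: (Good_eq _ (Good_inv (Good_exp m.+1 hg))) => i.
rewrite NegzE; ring.
Qed.

Lemma Good_xK i c : (forall l, c l = if l == i then 1 else 0) -> Good (xK i) c.
Proof.
move=> hc; exists 1, 1, (fun _ : 'I_n => 0 : int).
refine (conj (@hg1 n) (conj (@hg1 n) (conj erefl (conj _ _)))).
  rewrite ev0_1; exact: oner_neq0.
rewrite tofrac1 divr1 mulr1 /xmonK (bigD1 i) //= big1 => [|l hl].
  by rewrite hc eqxx mulr1 expr1z.
by rewrite hc (negbTE hl) expr0z.
Qed.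

Lemma fld1 (K : fieldType) (T X a b : K) : b != 0 -> X != 0 ->
  T + X^-1 * (a / b) = X^-1 * ((T * X * b + a) / b).
Proof. by move=> hb hX; field; rewrite hb hX. Qed.

Lemma fld2 (K : fieldType) (T X a b : K) : b != 0 ->
  1 + T * (X * (a / b)) = 1 * ((b + T * X * a) / b).
Proof. by move=> hb; field. Qed.

Lemma rl1 (R : ringType) (x y : R) : y = x -> 0 * x + y = x.
Proof. by move=> ->; rewrite mul0r add0r. Qed.
Lemma rl2 (R : ringType) (x y : R) : x + 0 * y = x.
Proof. by rewrite mul0r addr0. Qed.

Lemma Good_Phi (e : 'I_n -> int) u :
  (exists l, e l != 0) -> ((forall l, 0 <= e l) \/ (forall l, e l <= 0)) ->
  Good u (fun l => - e l) ->
  Good (tmon (fun l => pos (e l)) + tmon (fun l => pos (- e l)) * u)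
       (fun l => - pos (e l)).
Proof.
move=> [l0 hl0] [hge|hle] [A [B0 [d [hA [hB [e0 [nz ->]]]]]]].
- pose k l := `|e l|%N.
  have ek : forall l, e l = (k l)%:Z by move=> l; rewrite /k gez0_abs.
  rewrite (tmon_eq (c := fun l => pos (e l)) (c' := fun l => (k l)%:Z)); last by move=> l; rewrite pos_ge0 ek.
  rewrite (tmon_eq (c := fun l => pos (- e l)) (c' := fun _ => 0)); last by move=> l; rewrite pos_le0 // ek; lia.
  rewrite tmon0 mul1r.
  apply: (Good_eq (c := fun l => - (k l)%:Z)); first by move=> l; rewrite pos_ge0 ek.
  exists ('X_[mk k k] * B0 + A), B0, d; refine (conj _ (conj hB (conj _ (conj nz _)))).
  + apply: hgD; last exact: hA; refine (hg_eq (hgM (@hgX _ (mk k k)) hB) _).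
    by move=> i /=; rewrite wt_mk subrr add0r.
  + rewrite ev0D ev0M (@ev0_mono0 _ k).
    exact: (@rl1 {mpoly Cc[n]} _ _ e0).
    by exists l0; move: hl0; rewrite ek; apply: contra => /eqP ->.
  + rewrite (xmonK_eq (c' := fun l => - e l)); last by move=> l; rewrite ek.
    rewrite (xmonKN e) (xmonK_eq ek) tofracD tofracM -mono_frac.
    have nzB : B0%:F != 0 :> KK n by rewrite tofrac_eq0 ev0_neq0.
    have nzX := xmonK_neq0 (fun l => (k l)%:Z).
    exact: (@fld1 (KK n) _ _ _ _ nzB nzX).
- pose k l := `|e l|%N.
  have ek : forall l, e l = - (k l)%:Z by move=> l; rewrite /k lez0_abs ?opprK.
  rewrite (tmon_eq (c := fun l => pos (e l)) (c' := fun _ => 0)); last by move=> l; rewrite pos_le0.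
  rewrite (tmon_eq (c := fun l => pos (- e l)) (c' := fun l => (k l)%:Z)); last by move=> l; rewrite pos_ge0 ek ?opprK //; lia.
  rewrite tmon0.
  apply: (Good_eq (c := fun _ => 0)); first by move=> l; rewrite pos_le0 ?oppr0.
  exists (B0 + 'X_[mk k k] * A), B0, d; refine (conj _ (conj hB (conj _ (conj nz _)))).
  + apply: hgD; first exact: hB; refine (hg_eq (hgM (@hgX _ (mk k k)) hA) _).
    by move=> i /=; rewrite wt_mk subrr add0r.
  + rewrite ev0D ev0M (@ev0_mono0 _ k).
    exact: (@rl2 {mpoly Cc[n]} _ _).
    by exists l0; move: hl0; rewrite ek; apply: contra => /eqP ->.
  + rewrite (xmonK_eq (c' := fun l => (k l)%:Z)); last by move=> l; rewrite ek opprK.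
    rewrite xmonK0 tofracD tofracM -mono_frac.
    have nzB : B0%:F != 0 :> KK n by rewrite tofrac_eq0 ev0_neq0.
    exact: (@fld2 (KK n) _ _ _ _ nzB).
Qed.

End Good.


Section Mut.
Variable n : nat.

Lemma Good_mutY (k : 'I_n) (Bm Cm : 'M[int]_n) (Y : 'I_n -> KK n) :
  (forall j, Good (Y j) (fun l => Cm l j)) ->
  (exists l, Cm l k != 0) -> ((forall l, 0 <= Cm l k) \/ (forall l, Cm l k <= 0)) ->
  forall i, Good (mut_Y k Bm Cm Y i) (fun l => mut_c k Bm Cm l i).
Proof.
move=> hY [l0 hl0] hsc i; rewrite /mut_Y.
case: (eqVneq i k) => [->|hik].
  apply: (Good_eq _ (Good_inv (hY k))) => l; by rewrite mxE eqxx.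
have E : forall l, mut_c k Bm Cm l i = Cm l i + pos (Cm l k) * Bm k i + Cm l k * pos (- Bm k i).
  by move=> l; rewrite mxE (negbTE hik).
case: (eqVneq (Bm k i) 0) => hb.
  rewrite hb oppr0 expr0z mulr1; apply: (Good_eq _ (hY i)) => l.
  by rewrite E hb mulr0 oppr0 /pos /= mulr0 !addr0.
set b := Bm k i; set s := sgz b.
have hs : s = 1 \/ s = -1.
  rewrite /s; case: (ltrgtP b 0) => h.
  - by right; rewrite ltr0_sgz.
  - by left; rewrite gtr0_sgz.
  - by move: hb; rewrite -/b h eqxx.
pose e l := s * Cm l k.
have hu : Good (Y k ^ (- s)) (fun l => - e l).
  by apply: (Good_eq _ (Good_expz (- s) (hY k))) => l; rewrite /e mulNr.
have he : exists l, e l != 0.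
  exists l0; rewrite /e mulf_neq0 //; by case: hs => ->.
have hesc : (forall l, 0 <= e l) \/ (forall l, e l <= 0).
  rewrite /e; case: hs => ->; case: hsc => h.
  - by left => l; rewrite mul1r.
  - by right => l; rewrite mul1r.
  - by right => l; rewrite mulN1r oppr_le0.
  - by left => l; rewrite mulN1r oppr_ge0.
have hPhi := Good_Phi he hesc hu.
rewrite (tmon_eq (c := fun l => pos (- s * Cm l k)) (c' := fun l => pos (- e l)));
  last by move=> l; rewrite /e mulNr.
apply: (Good_eq _ (Good_mul (hY i) (Good_expz (- b) hPhi))) => l.
by rewrite E mulrNN -addrA -pos_arith.
Qed.

Definition fstep (st : 'M[int]_n * 'M[int]_n) (k : 'I_n) :=
  (mut_mat k st.1, mut_c k st.1 st.2).

Lemma seed_fst (p : seq 'I_n) st :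
  (foldl (@seed_step n) st p).1 = foldl fstep st.1 p.
Proof. by elim: p st => [|k p IH] st //=; rewrite IH. Qed.

Lemma reduced_rcons (p : seq 'I_n) k : reduced (rcons p k) -> reduced p.
Proof. by case: p => //= x p; rewrite rcons_path => /andP []. Qed.

Lemma Good_fold (B : 'M[int]_n) (p : seq 'I_n) :
  (forall q : seq 'I_n, reduced q -> sign_coherent (Cv B q)) ->
  reduced p -> forall j,
  Good (pullback B p j) (fun l => Cv B p l j).
Proof.
move=> hsc; elim/last_ind: p => [|p k IH] hred j.
  rewrite /pullback /Cv /=; apply: Good_xK => l; rewrite mxE.
  by case: (l == j).
have hp := reduced_rcons hred.
rewrite /pullback /Cv !foldl_rcons /=.
have -> : (foldl (fun st k => (mut_mat k st.1, mut_c k st.1 st.2)) (B, 1%:M) p) =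
          (foldl (@seed_step n) (B, 1%:M, @xK n) p).1 by rewrite seed_fst.
have [hnz hsg] := hsc p hp k.
have HC : Cv B p = (foldl (@seed_step n) (B, 1%:M, @xK n) p).1.2 by rewrite seed_fst.
apply: Good_mutY.
- move=> j'; have := IH hp j'; rewrite /pullback HC; exact.
- by rewrite -HC.
- by rewrite -HC.
Qed.

End Mut.


Lemma nC_ge0 (z : Cc) : 0 <= normC z.
Proof. by case: z => a b; rewrite /normC /=; apply: sqrtr_ge0. Qed.
Lemma nC_add (x y : Cc) : normC (x + y) <= normC x + normC y.
Proof. exact: le_normcD. Qed.
Lemma nC_mul (x y : Cc) : normC (x * y) = normC x * normC y.
Proof. exact: ComplexField.Normc.normcM. Qed.
Lemma nC_opp (x : Cc) : normC (- x) = normC x.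
Proof. exact: normcN. Qed.
Lemma nC_eq0 (x : Cc) : normC x = 0 -> x = 0.
Proof. exact: ComplexField.Normc.eq0_normc. Qed.
Lemma nC0 : normC 0 = 0.
Proof. exact: ComplexField.Normc.normc0. Qed.
Lemma nC_inv (x : Cc) : normC x^-1 = (normC x)^-1.
Proof. exact: ComplexField.Normc.normcV. Qed.
Lemma nC_sub (x y : Cc) : normC (x - y) = normC (y - x).
Proof. by rewrite -nC_opp opprB. Qed.

Definition lim1 (F : RR -> Cc) (L : Cc) := forall e : RR, 0 < e ->
  exists2 d : RR, 0 < d & forall s : RR, 1 - d < s < 1 -> normC (F s - L) < e.

Lemma lim1_const (L : Cc) : lim1 (fun _ => L) L.
Proof. by move=> e he; exists 1 => // s _; rewrite subrr nC0. Qed.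

Lemma lim1_add F G L M : lim1 F L -> lim1 G M -> lim1 (fun s => F s + G s) (L + M).
Proof.
move=> hF hG e he.
have he2 : 0 < e / 2 by lra.
have [d1 hd1 H1] := hF _ he2; have [d2 hd2 H2] := hG _ he2.
exists (Num.min d1 d2); first by rewrite lt_min hd1 hd2.
move=> s /andP [hs1 hs2].
have h1 : 1 - d1 < s < 1.
  by apply/andP; split => //; apply: le_lt_trans hs1; rewrite lerD2l lerN2 ge_min lexx.
have h2 : 1 - d2 < s < 1.
  by apply/andP; split => //; apply: le_lt_trans hs1; rewrite lerD2l lerN2 ge_min lexx orbT.
have := H1 _ h1; have := H2 _ h2.
have -> : F s + G s - (L + M) = (F s - L) + (G s - M) by ring.
move=> a b; apply: le_lt_trans (nC_add _ _) _; lra.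
Qed.

Lemma min_win (d1 d2 s : RR) : 1 - Num.min d1 d2 < s < 1 ->
  (1 - d1 < s < 1) /\ (1 - d2 < s < 1).
Proof.
move=> /andP [hs1 hs2]; split; apply/andP; split => //; apply: le_lt_trans hs1;
  rewrite lerD2l lerN2 ge_min lexx ?orbT //.
Qed.

Lemma lim1_mul F G L M : lim1 F L -> lim1 G M -> lim1 (fun s => F s * G s) (L * M).
Proof.
move=> hF hG e he.
set K := 1 + normC L + normC M.
have hK : 0 < K by have := nC_ge0 L; have := nC_ge0 M; rewrite /K; lra.
set e' := Num.min 1 (e / K).
have he' : 0 < e' by rewrite lt_min ltr01 divr_gt0.
have e'1 : e' <= 1 by rewrite ge_min lexx.
have e'K : e' * K <= e.
  by rewrite -ler_pdivlMr // ge_min lexx orbT.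
have [d1 hd1 H1] := hF _ he'; have [d2 hd2 H2] := hG _ he'.
exists (Num.min d1 d2); first by rewrite lt_min hd1 hd2.
move=> s /min_win [h1 h2].
have := H1 _ h1; have := H2 _ h2.
have -> : F s * G s - L * M = (F s - L) * (G s - M) + (L * (G s - M) + M * (F s - L)) by ring.
set a := normC (F s - L); set b := normC (G s - M) => hb ha.
have ha0 : 0 <= a := nC_ge0 _. have hb0 : 0 <= b := nC_ge0 _.
have hL := nC_ge0 L; have hM := nC_ge0 M.
apply: (le_lt_trans (nC_add _ _)); rewrite nC_mul.
apply: (le_lt_trans (lerD (lexx _) (nC_add _ _))); rewrite !nC_mul -/a -/b.
have hab : a * b <= e' * e' by apply: ler_pM => //; apply: ltW.
have hLb : normC L * b <= normC L * e' by apply: ler_wpM2l => //; apply: ltW.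
have hMa : normC M * a <= normC M * e' by apply: ler_wpM2l => //; apply: ltW.
have hee : e' * e' <= e' by rewrite -[leRHS]mulr1 ler_wpM2l // ltW.
have hLb' : normC L * b < normC L * e' + e' * e' * 0 + (e' - b) by nra.
move: e'K; rewrite /K; nra.
Qed.

Lemma lim1_nz G M : lim1 G M -> M != 0 ->
  exists2 d : RR, 0 < d & forall s, 1 - d < s < 1 -> normC M / 2 < normC (G s).
Proof.
move=> hG hM.
have hMp : 0 < normC M.
  rewrite lt_def nC_ge0 andbT; apply/eqP => /nC_eq0 h; by rewrite h eqxx in hM.
have [d hd H] := hG (normC M / 2) ltac:(lra).
exists d => // s hs; have := H _ hs.
have := nC_add (M - G s) (G s); rewrite subrK nC_sub; lra.
Qed.

Lemma lim1_inv G M : lim1 G M -> M != 0 -> lim1 (fun s => (G s)^-1) M^-1.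
Proof.
move=> hG hM e he.
have hMp : 0 < normC M.
  rewrite lt_def nC_ge0 andbT; apply/eqP => /nC_eq0 h; by rewrite h eqxx in hM.
have [d1 hd1 H1] := lim1_nz hG hM.
set e' := e * (normC M * normC M) / 2.
have he' : 0 < e' by rewrite /e'; apply: divr_gt0 => //; apply: mulr_gt0 => //; apply: mulr_gt0.
have [d2 hd2 H2] := hG _ he'.
exists (Num.min d1 d2); first by rewrite lt_min hd1 hd2.
move=> s /min_win [h1 h2].
have g1 := H1 _ h1; have g2 := H2 _ h2.
have hGs : G s != 0 by apply/eqP => h; move: g1; rewrite h nC0; lra.
have -> : (G s)^-1 - M^-1 = (M - G s) * ((G s)^-1 * M^-1).
  by field; rewrite hGs hM.
rewrite !nC_mul !nC_inv nC_sub.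
set g := normC (G s); set m := normC M; set a := normC (G s - M).
have hg : 0 < g by rewrite /g; lra.
rewrite -/a in g2.
have : a * (g^-1 * m^-1) < e' * (g^-1 * m^-1).
  by rewrite ltr_pM2r // mulr_gt0 // invr_gt0.
move=> h; apply: (lt_le_trans h); rewrite /e'.
have g1' : m / 2 < g by [].
have hgi : g^-1 <= 2 / m.
  rewrite -subr_ge0.
  have -> : 2 / m - g^-1 = (2 * g - m) / (m * g).
    by field; rewrite !gt_eqF.
  apply: divr_ge0; [lra | apply: ltW; apply: mulr_gt0 => //].
have : e * (m * m) / 2 * (g^-1 * m^-1) <= e * (m * m) / 2 * (2 / m * m^-1).
  apply: ler_wpM2l; first exact: (ltW he').
  by apply: ler_wpM2r => //; rewrite invr_ge0 ltW.
move=> h'; apply: (le_trans h'); rewrite le_eqVlt; apply/orP; left; apply/eqP.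
by field; rewrite gt_eqF.
Qed.

Lemma lim1_ext F G L : (forall s, F s = G s) -> lim1 F L -> lim1 G L.
Proof. by move=> e h eps heps; have [d hd H] := h _ heps; exists d => // s hs; rewrite -e; apply: H. Qed.

Lemma lim1_sum (I : Type) (r : seq I) (F : I -> RR -> Cc) (L : I -> Cc) :
  (forall i, lim1 (F i) (L i)) ->
  lim1 (fun s => \sum_(i <- r) F i s) (\sum_(i <- r) L i).
Proof.
move=> h; elim: r => [|x r IH].
  rewrite big_nil; apply: (lim1_ext (F := fun _ => 0)); last exact: lim1_const.
  by move=> s; rewrite big_nil.
rewrite big_cons; apply: (lim1_ext (F := fun s => F x s + \sum_(i <- r) F i s)).
  by move=> s; rewrite big_cons.
exact: lim1_add.
Qed.

Lemma lim1_prod (I : Type) (r : seq I) (F : I -> RR -> Cc) (L : I -> Cc) :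
  (forall i, lim1 (F i) (L i)) ->
  lim1 (fun s => \prod_(i <- r) F i s) (\prod_(i <- r) L i).
Proof.
move=> h; elim: r => [|x r IH].
  rewrite big_nil; apply: (lim1_ext (F := fun _ => 1)); last exact: lim1_const.
  by move=> s; rewrite big_nil.
rewrite big_cons; apply: (lim1_ext (F := fun s => F x s * \prod_(i <- r) F i s)).
  by move=> s; rewrite big_cons.
exact: lim1_mul.
Qed.

Lemma lim1_exp F L (m : nat) : lim1 F L -> lim1 (fun s => F s ^+ m) (L ^+ m).
Proof.
move=> h; elim: m => [|m IH].
  by rewrite expr0; apply: (lim1_ext (F := fun _ => 1)); [move=> s; rewrite expr0|exact: lim1_const].
rewrite exprS; apply: (lim1_ext (F := fun s => F s * F s ^+ m)).
  by move=> s; rewrite exprS.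
exact: lim1_mul.
Qed.

Lemma lim1_meval (k : nat) (v : RR -> 'I_k -> Cc) (v0 : 'I_k -> Cc) (P : {mpoly Cc[k]}) :
  (forall j, lim1 (fun s => v s j) (v0 j)) ->
  lim1 (fun s => meval (v s) P) (meval v0 P).
Proof.
move=> hv; rewrite mevalE.
apply: (lim1_ext (F := fun s => \sum_(m <- msupp P) P@_m * \prod_i v s i ^+ m i)).
  by move=> s; rewrite mevalE.
apply: lim1_sum => m; apply: lim1_mul; first exact: lim1_const.
by apply: lim1_prod => i; apply: lim1_exp.
Qed.


Lemma crel (R : comRingType) (p q p1 q1 g f : R) :
  p * q1 = p1 * q -> p1 * g = q1 * f -> p * g * q1 = q * f * q1.
Proof. by move=> E1 E2; rewrite mulrAC E1 mulrAC E2; ring. Qed.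

Lemma crel2 (R : comRingType) (p q p' q' g f : R) :
  p * g = q * f -> p' * g = q' * f -> p * q' * g = p' * q * g.
Proof. by move=> E1 E2; rewrite mulrAC E1 [RHS]mulrAC E2; ring. Qed.

Lemma crel3 (R : comRingType) (u v d a b : R) :
  u * (d * b) = v * (d * a) -> d * (u * b) = d * (v * a).
Proof. by move=> E; rewrite mulrCA E mulrCA. Qed.

Lemma subr0_eq (R : zmodType) (x y : R) : x - y = 0 -> x = y.
Proof. by move/eqP; rewrite subr_eq0 => /eqP. Qed.

Lemma pos_ge0' (x : int) : 0 <= pos x.
Proof. by rewrite /pos le_max lexx orbT. Qed.

Section Final.
Variable n : nat.
Local Notation U := {mpoly Cc[n]}.

Definition pc (c : 'I_n -> int) i := `|pos (c i)|%N.
Definition nc (c : 'I_n -> int) i := `|pos (- c i)|%N.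
Definition mk0 (b : 'I_n -> nat) := mk (fun _ => 0%N) b.

Lemma c_split c i : c i = (pc c i)%:Z + - (nc c i)%:Z.
Proof.
rewrite /pc /nc !gez0_abs ?pos_ge0' //.
case: (lerP 0 (c i)) => h.
  by rewrite pos_ge0 // pos_le0 ?oppr0 ?addr0 //; lia.
by rewrite pos_le0 ?pos_ge0 ?opprK ?add0r //; lia.
Qed.

Lemma xmonK_nat (b : 'I_n -> nat) :
  xmonK (fun i => (b i)%:Z) = ('X_[mk0 b] : Pol n)%:F.
Proof.
rewrite /mk0 -monoE [X in (X * _)%:F]big1 => [|i _]; last exact: expr0.
rewrite mul1r rmorph_prod.
by apply: eq_bigr => i _; rewrite rmorphXn.
Qed.

Lemma xmonK_split c : xmonK c = ('X_[mk0 (pc c)] : Pol n)%:F / ('X_[mk0 (nc c)] : Pol n)%:F.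
Proof.
rewrite (xmonK_eq (c_split c)) xmonKD (xmonKN (fun i => (nc c i)%:Z)).
by rewrite !xmonK_nat.
Qed.

Lemma fracE (P Q P' Q' : Pol n) : Q != 0 -> Q' != 0 ->
  P%:F / Q%:F = P'%:F / Q'%:F -> P * Q' = P' * Q.
Proof.
move=> hQ hQ' h.
have hQf : Q%:F != 0 :> KK n by rewrite tofrac_eq0.
have hQf' : Q'%:F != 0 :> KK n by rewrite tofrac_eq0.
have := eqr_div P%:F P'%:F hQf hQf'; rewrite h eqxx -!tofracM tofrac_eq => /esym/eqP.
exact.
Qed.

Lemma fracI (P Q P' Q' : Pol n) : Q != 0 -> Q' != 0 ->
  P * Q' = P' * Q -> P%:F / Q%:F = P'%:F / Q'%:F.
Proof.
move=> hQ hQ' h.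
have hQf : Q%:F != 0 :> KK n by rewrite tofrac_eq0.
have hQf' : Q'%:F != 0 :> KK n by rewrite tofrac_eq0.
apply/eqP; rewrite (eqr_div P%:F P'%:F hQf hQf') -!tofracM h.
exact: eqxx.
Qed.

Lemma Xm_neq0 m : ('X_[m] : Pol n) != 0.
Proof.
apply/eqP => h; have := @mcoeffX (n + n) Cc m m; rewrite h mcoeff0 eqxx.
by move/eqP; rewrite eq_sym oner_eq0.
Qed.

Lemma at1_0 : at1 (0 : Pol n) = 0. Proof. exact: raddf0. Qed.

Lemma at1_neq0 (Q : Pol n) d : Hg Q d -> Q != 0 -> at1 Q != 0.
Proof. by move=> hQ; apply: contra => /eqP h; apply/eqP; apply: (at1_inj0 hQ h). Qed.

Lemma L_uni (P Q P' Q' : Pol n) dP dQ dP' dQ' :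
  Hg P dP -> Hg Q dQ -> Hg P' dP' -> Hg Q' dQ' -> Q != 0 -> Q' != 0 ->
  (forall i, dP i - dQ i = dP' i - dQ' i) ->
  at1 P * at1 Q' = at1 P' * at1 Q -> P%:F / Q%:F = P'%:F / Q'%:F.
Proof.
move=> hP hQ hP' hQ' nQ nQ' hd ha; apply: (fracI nQ nQ').
apply: subr0_eq; apply: (at1_inj0 (d := fun i => dP i + dQ' i)).
  apply: hgD; first exact: hgM.
  apply: hgN; apply: (hg_eq (hgM hP' hQ)) => i; have := hd i; lia.
rewrite at1B !at1M; move: ha.
move: (at1 P) (at1 Q') (at1 P') (at1 Q) => a b c d0 ->; exact: subrr.
Qed.

Lemma key_rel (h : KK n) (P Q : Pol n) f g : Q != 0 -> h = P%:F / Q%:F ->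
  SpecOne h f g -> at1 P * g = at1 Q * f.
Proof.
move=> nQ hh [P1 [Q1 [h1 [nQ1 E2]]]].
have nQ1' : Q1 != 0 by apply: contra nQ1 => /eqP ->; rewrite at1_0.
have E := fracE nQ nQ1' (etrans (esym hh) h1).
have E1 : at1 P * at1 Q1 = at1 P1 * at1 Q.
  by have := congr1 (@at1 n) E; rewrite !at1M.
apply: (@mulIf U _ nQ1); exact: (@crel U _ _ _ _ _ _ E1 E2).
Qed.

Lemma hg_tlift (N : 'I_n -> nat) f :
  Hg (tlift (fun (m : 'X_{1..n}) i => (m i + N i)%N) f) (fun i => - (N i)%:Z).
Proof.
rewrite /tlift; apply: (big_ind (fun x => Hg x _)).
- exact: hg0.
- by move=> x y; apply: hgD.
move=> m _; rewrite monoE; apply: hgZ; apply: (hg_eq (@hgX _ _)) => i.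
rewrite wt_mk; lia.
Qed.

Definition Rep (h : KK n) c (P Q : Pol n) (A B0 : Pol n) d :=
  Hg A d /\ Hg B0 d /\ ev0 A = ev0 B0 /\ ev0 B0 != 0 /\
      P = 'X_[mk0 (pc c)] * A /\ Q = 'X_[mk0 (nc c)] * B0 /\ h = P%:F / Q%:F.

Lemma Good_rep h c : Good h c -> exists P Q A B0 d, Rep h c P Q A B0 d.
Proof.
move=> [A [B0 [d [hA [hB [e0 [nz ->]]]]]]].
exists ('X_[mk0 (pc c)] * A), ('X_[mk0 (nc c)] * B0), A, B0, d.
refine (conj hA (conj hB (conj e0 (conj nz (conj erefl (conj erefl _)))))).
by rewrite xmonK_split !tofracM invfM mulrACA.
Qed.

Lemma Rep_homog h c P Q A B0 d : Rep h c P Q A B0 d ->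
  [/\ Hg P (fun i => wt (mk0 (pc c)) i + d i), Hg Q (fun i => wt (mk0 (nc c)) i + d i),
      Q != 0 & forall i, (wt (mk0 (pc c)) i + d i) - (wt (mk0 (nc c)) i + d i) = c i].
Proof.
move=> [hA [hB [e0 [nz [eP [eQ eh]]]]]]; split.
- rewrite eP; apply: hgM; [exact: hgX | exact: hA].
- rewrite eQ; apply: hgM; [exact: hgX | exact: hB].
- rewrite eQ; apply: mulf_neq0; [exact: Xm_neq0| exact: ev0_neq0].
- move=> i; rewrite /mk0 !wt_mk (c_split c i); lia.
Qed.

Lemma coprime_ex (u v : U) N : forall f g : U, g != 0 -> (msize g <= N)%N ->
  u * g = v * f -> exists f' g' : U, g' != 0 /\ mcoprime f' g' /\ u * g' = v * f'.
Proof.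
elim: N => [|N IH] f g ng hs E.
  exfalso; move: ng; rewrite -msize_poly_eq0; move: hs; rewrite leqn0 => /eqP ->.
  by rewrite eqxx.
case: (classic (mcoprime f g)) => hc; first by exists f, g.
have [d [a [b [hf [hg hd]]]]] : exists d a b : U, f = d * a /\ g = d * b /\ (1 < msize d)%N.
  apply: NNPP => H; apply: hc => d a b hf hg; case: (leqP (msize d) 1) => // hd.
  by exfalso; apply: H; exists d, a, b.
have nd : d != 0.
  apply/eqP => hd0; move/eqP: ng; apply; rewrite hg hd0; exact: mul0r.
have nb : b != 0.
  apply/eqP => hb0; move/eqP: ng; apply; rewrite hg hb0; exact: mulr0.
have hsz := msizeM nd nb; rewrite -hg in hsz.
apply: (IH a b nb).
  move: hs hd; rewrite hsz -subn1; move: (msize d) (msize b) => x y; lia.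
apply: (mulfI nd); apply: crel3; rewrite -hg -hf; exact: E.
Qed.

Lemma Xk_neq0 (i : 'I_n) : ('X_i : U) != 0.
Proof.
apply/eqP => h; have := @mcoeffX n Cc U_(i)%MM U_(i)%MM; rewrite h mcoeff0 eqxx.
by move/eqP; rewrite eq_sym oner_eq0.
Qed.

Lemma meval_mk0 (v : 'I_n -> Cc) (b : 'I_n -> nat) :
  meval (pt (fun _ => 0) v) ('X_[mk0 b] : Pol n) = \prod_i v i ^+ b i.
Proof.
rewrite mevalX big_split_ord /= big1 ?mul1r.
  by apply: eq_bigr => i _; rewrite /pt split_r /mk0 mk_r.
by move=> i _; rewrite /mk0 mk_l expr0.
Qed.

Lemma lim1_pt (gam : RR -> 'I_n -> Cc) (X : 'I_n -> Cc) :
  path_cont gam -> gam 1 = (fun _ => 0) ->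
  forall k, lim1 (fun s => pt (gam s) X k) (pt (fun _ => 0) X k).
Proof.
move=> hc h1 k; rewrite /pt; case: (split k) => i; last exact: lim1_const.
move=> e he.
have h01 : 0 <= (1 : RR) <= 1 by rewrite ler01 lexx.
have [d hd H] := hc 1 h01 e he.
exists (Num.min d 1); first by rewrite lt_min hd ltr01.
move=> s /min_win [/andP [hs1 hs2] /andP [hs3 _]].
have := H s; rewrite h1; apply.
  by apply/andP; split; [lra | apply: ltW].
rewrite ler0_norm; lra.
Qed.

Lemma prod_expz (X : 'I_n -> Cc) c : (forall i, X i != 0) ->
  \prod_j X j ^ c j = (\prod_i X i ^+ pc c i) / (\prod_i X i ^+ nc c i).
Proof.
move=> hX; rewrite -prodfV -big_split; apply: eq_bigr => i _ /=.
by rewrite (c_split c i) expfzDr ?hX // -invr_expz.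
Qed.

Lemma Limit_of_Good (h : KK n) (c : 'I_n -> int) : Good h c -> LimitProp h c.
Proof.
move=> /Good_rep [P [Q [A [B0 [d hR]]]]].
have [hPh hQh nQ hdeg] := Rep_homog hR.
move: hR => [hA [hB [e0 [nz [eP [eQ eh]]]]]].
exists (ev0 B0 * \prod_(i < n) 'X_i).
  apply: (@mulf_neq0 U _ _ nz); rewrite prodf_seq_neq0; apply/allP => i _; exact: Xk_neq0.
move=> X hX gam hgc hg1 _ e he.
move: hX; rewrite mevalM mulf_eq0 negb_or => /andP [hXB hXP].
have hXi : forall i, X i != 0.
  move=> i; move: hXP; rewrite rmorph_prod /= prodf_seq_neq0 => /allP /(_ i).
  by rewrite mem_index_enum mevalXU => /(_ isT).
pose v s := pt (gam s) X; pose v0 := pt (fun _ => 0) X.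
have hv : forall k, lim1 (fun s => v s k) (v0 k) := lim1_pt X hgc hg1.
have hlP := lim1_meval P hv; have hlQ := lim1_meval Q hv.
have EQ0 : meval v0 Q = (\prod_i X i ^+ nc c i) * meval X (ev0 B0).
  by rewrite eQ mevalM meval_mk0 meval_ev0.
have EP0 : meval v0 P = (\prod_i X i ^+ pc c i) * meval X (ev0 B0).
  by rewrite eP mevalM meval_mk0 -e0 meval_ev0.
have hQ0 : meval v0 Q != 0.
  rewrite EQ0 mulf_neq0 // prodf_seq_neq0; apply/allP => i _; exact: expf_neq0.
have hlim := lim1_mul hlP (lim1_inv hlQ hQ0).
have [d1 hd1 H1] := hlim e he.
have [d2 hd2 H2] := lim1_nz hlQ hQ0.
exists (Num.min d1 d2); first by rewrite lt_min hd1 hd2.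
move=> s /min_win [h1 h2] z [P' [Q' [hQ' [hh hz]]]].
have nQ' : Q' != 0 by apply: contra hQ' => /eqP ->; rewrite meval0.
have E := fracE nQ nQ' (etrans (esym eh) hh).
have Ev := congr1 (meval (v s)) E; rewrite !mevalM in Ev.
have hQs : meval (v s) Q != 0.
  have hM : 0 < normC (meval v0 Q).
    rewrite lt_def nC_ge0 andbT; apply/eqP => /nC_eq0 h0; by rewrite h0 eqxx in hQ0.
  apply/eqP => h0; have := H2 _ h2; rewrite h0 nC0; lra.
have -> : z = meval (v s) P / meval (v s) Q.
  rewrite hz; apply/eqP; rewrite eqr_div // Ev; exact: eqxx.
have := H1 _ h1.
suff -> : meval v0 P * (meval v0 Q)^-1 = \prod_j X j ^ c j by [].
rewrite EP0 EQ0 prod_expz // invfM mulrACA divff ?mulr1 //.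
Qed.

End Final.

Unset Implicit Arguments.
Theorem mainTheorem6 (n : nat) (B : 'M[int]_n) (F : {set 'I_n}) :
  (0 < n)%N -> skew_symmetrizable B ->
  (forall q : seq 'I_n, reduced q -> sign_coherent (Cv B q)) ->
  forall (p : seq 'I_n), in_TF F p -> forall i : 'I_n,
    let h := pullback B p i in
    let c := fun l => Cv B p l i in
    LimitProp h c /\
    (exists f g : {mpoly Cc[n]}, g != 0 /\ mcoprime f g /\ SpecOne h f g) /\
    (forall f g : {mpoly Cc[n]}, g != 0 -> mcoprime f g -> SpecOne h f g ->
       IsHomogenization h f g c /\
       forall h' : KK n, IsHomogenization h' f g c -> LimitProp h' c -> h' = h).
Proof.
move=> _ _ hsc p /andP [hred _] i h c.
have hG : Good h c := Good_fold hsc hred i.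
split; first exact: Limit_of_Good.
have [P [Q [A [B0 [d hR]]]]] := Good_rep hG.
have [hPh hQh nQ hdeg] := Rep_homog hR.
have eh : h = P%:F / Q%:F by move: hR => [_ [_ [_ [_ [_ [_ ->]]]]]].
have naQ := at1_neq0 hQh nQ.
split.
  have [f [g [ng [hcp E]]]] := @coprime_ex n (at1 P) (at1 Q) (msize (at1 Q)) (at1 P) (at1 Q) naQ (leqnn _) (mulrC (at1 P) (at1 Q)).
  by exists f, g; split => //; split => //; exists P, Q.
move=> f g ng _ hS.
have KR := key_rel nQ eh hS.
pose Na := nc c; pose Nb := pc c.
pose a := fun (m : 'X_{1..n}) i => (m i + Na i)%N.
pose b := fun (m : 'X_{1..n}) i => (m i + Nb i)%N.
have hgb : tlift b g != 0.
  by apply: contra ng => /eqP h0; rewrite -(at1_tlift b g) h0 at1_0.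
have homh : homogK h c.
  exists P, Q, (fun i => wt (mk0 (pc c)) i + d i), (fun i => wt (mk0 (nc c)) i + d i).
  by split => //; split => //.
split.
  exists a, b; split => //.
  rewrite eh; apply: (L_uni hPh hQh (@hg_tlift n Na f) (@hg_tlift n Nb g) nQ hgb).
    move=> j; rewrite hdeg /Na /Nb (c_split c j); lia.
  by rewrite !at1_tlift KR mulrC.
move=> h' [a' [b' [eh' [P' [Q' [dP' [dQ' [nQ' [eh2 [hP' [hQ' hd']]]]]]]]]]] _.
have S' : SpecOne h' f g.
  exists (tlift a' f), (tlift b' g); rewrite !at1_tlift; split => //; split => //.
  exact: mulrC.
have KR' := key_rel nQ' eh2 S'.
rewrite eh2 eh; apply: (L_uni hP' hQ' hPh hQh nQ' nQ).
  by move=> j; rewrite hd' hdeg.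
apply: (@mulIf {mpoly Cc[n]} _ ng); exact: (@crel2 {mpoly Cc[n]} _ _ _ _ _ _ KR' KR).
Qed.
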